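(* Let $H\subset\mathbb{R}^n$ be a bounded domain and let $u_1,u_2\in C^2(H)\cap C(\overline H)$ be bounded functions with $D_{H,\varphi}u_1\le D_{H,\varphi}u_2$ in $H$ and $u_1=u_2=\varphi$ on $\partial H$. Then $u_1\le u_2$ in $H$.
   Context: For an open set $H\subset\mathbb{R}^n$, a function $\varphi$ on $\partial H$ and $u$ on $\overline H$ with $u=\varphi$ on $\partial H$, let $v$ be the bounded harmonic function in $\Omega=H\times(0,\infty)$, continuous up to the boundary, with $v(x,0)=u(x)$ for $x\in H$ and $v(x,\lambda)=\varphi(x)$ on $\partial H\times[0,\infty)$. Define $D_{H,\varphi}u(x):=-\partial_\lambda v(x,0)$ for $x\in H$. *)

(* Defs.v *)
From Stdlib Require Import Reals Lra Arith.
Open Scope R_scope.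

(* Points of R^n are represented as functions nat -> R vanishing at all
   coordinates i >= n.  For points of R^{n+1} = R^n x R, coordinate n is
   the extra variable lambda. *)
Definition pt := nat -> R.

Definition inRn (n : nat) (x : pt) : Prop := forall i, (n <= i)%nat -> x i = 0.

Fixpoint fsum (n : nat) (g : nat -> R) : R :=
  match n with O => 0 | S k => fsum k g + g k end.

Definition dist (n : nat) (x y : pt) : R := sqrt (fsum n (fun i => (x i - y i) ^ 2)).

Definition origin : pt := fun _ => 0.

Definition is_open (n : nat) (H : pt -> Prop) : Prop :=
  (forall x, H x -> inRn n x) /\
  (forall x, H x -> exists r, 0 < r /\ forall y, inRn n y -> dist n x y < r -> H y).

Definition closure (n : nat) (H : pt -> Prop) (y : pt) : Prop :=
  inRn n y /\ forall r, 0 < r -> exists x, H x /\ dist n x y < r.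

Definition boundary (n : nat) (H : pt -> Prop) (y : pt) : Prop :=
  closure n H y /\ ~ H y.

Definition bounded_set (n : nat) (H : pt -> Prop) : Prop :=
  exists M, forall x, H x -> dist n x origin <= M.

Definition connected (n : nat) (H : pt -> Prop) : Prop :=
  forall A B : pt -> Prop,
    (forall x, H x <-> (A x \/ B x)) -> (forall x, ~ (A x /\ B x)) ->
    is_open n A -> is_open n B -> (forall x, ~ A x) \/ (forall x, ~ B x).

Definition bounded_domain (n : nat) (H : pt -> Prop) : Prop :=
  is_open n H /\ connected n H /\ (exists x, H x) /\ bounded_set n H.

Definition cont_on (n : nat) (S : pt -> Prop) (f : pt -> R) : Prop :=
  forall x, S x -> forall eps, 0 < eps -> exists d, 0 < d /\
    forall y, S y -> dist n x y < d -> Rabs (f y - f x) < eps.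

Definition bounded_on (S : pt -> Prop) (f : pt -> R) : Prop :=
  exists M, forall x, S x -> Rabs (f x) <= M.

Definition upd (x : pt) (i : nat) (t : R) : pt :=
  fun j => if Nat.eqb j i then x j + t else x j.

Definition partial_at (f : pt -> R) (i : nat) (x : pt) (l : R) : Prop :=
  derivable_pt_lim (fun t => f (upd x i t)) 0 l.

Definition C2_with (n : nat) (H : pt -> Prop) (f : pt -> R)
    (d1 : nat -> pt -> R) (d2 : nat -> nat -> pt -> R) : Prop :=
  (forall i x, (i < n)%nat -> H x -> partial_at f i x (d1 i x)) /\
  (forall i j x, (i < n)%nat -> (j < n)%nat -> H x -> partial_at (d1 i) j x (d2 i j x)) /\
  (forall i, (i < n)%nat -> cont_on n H (d1 i)) /\
  (forall i j, (i < n)%nat -> (j < n)%nat -> cont_on n H (d2 i j)).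

Definition C2_on (n : nat) (H : pt -> Prop) (f : pt -> R) : Prop :=
  exists d1 d2, C2_with n H f d1 d2.

Definition harmonic_on (n : nat) (S : pt -> Prop) (v : pt -> R) : Prop :=
  exists d1 d2, C2_with n S v d1 d2 /\
    forall y, S y -> fsum n (fun i => d2 i i y) = 0.

Definition trunc (n : nat) (y : pt) : pt := fun i => if Nat.ltb i n then y i else 0.
Definition ext (n : nat) (x : pt) (l : R) : pt :=
  fun i => if Nat.ltb i n then x i else if Nat.eqb i n then l else 0.

Definition Omega (n : nat) (H : pt -> Prop) (y : pt) : Prop :=
  inRn (S n) y /\ H (trunc n y) /\ 0 < y n.

Definition right_deriv (g : R -> R) (a l : R) : Prop :=
  forall eps, 0 < eps -> exists d, 0 < d /\
    forall h, 0 < h < d -> Rabs ((g (a + h) - g a) / h - l) < eps.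

(* w = D_{H,phi} u : w(x) = - d/dlambda v(x,0), where v is the bounded harmonic
   function in Omega, continuous up to the boundary, with v(x,0) = u(x) on H and
   v(x,lambda) = phi(x) on (boundary H) x [0,oo). *)
Definition DtN (n : nat) (H : pt -> Prop) (phi u w : pt -> R) : Prop :=
  exists v : pt -> R,
    harmonic_on (S n) (Omega n H) v /\
    bounded_on (Omega n H) v /\
    cont_on (S n) (closure (S n) (Omega n H)) v /\
    (forall x, H x -> v (ext n x 0) = u x) /\
    (forall x l, boundary n H x -> 0 <= l -> v (ext n x l) = phi x) /\
    (forall x, H x -> right_deriv (fun l => v (ext n x l)) 0 (- w x)).

(* Main.v *)
Require Import Defs.
From Stdlib Require Import Reals Lra Lia Arith ZArith FunctionalExtensionality ClassicalEpsilon Classical.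
From Coquelicot Require Import Coquelicot.
Require Import Defs.
Open Scope R_scope.

Lemma fsum_ext N f g : (forall i, (i < N)%nat -> f i = g i) -> fsum N f = fsum N g.
Proof. induction N; simpl; intros; auto. rewrite IHN by (intros; apply H; lia). rewrite H by lia; auto. Qed.

Lemma fsum_plus N f g : fsum N (fun i => f i + g i) = fsum N f + fsum N g.
Proof. induction N; simpl; [lra|]. rewrite IHN; lra. Qed.

Lemma fsum_scal N c f : fsum N (fun i => c * f i) = c * fsum N f.
Proof. induction N; simpl; [lra|]. rewrite IHN; lra. Qed.

Lemma fsum_const N c : fsum N (fun _ => c) = INR N * c.
Proof. induction N; simpl fsum; [simpl; lra|]. rewrite IHN, S_INR; lra. Qed.

Lemma fsum_le N f g : (forall i, (i < N)%nat -> f i <= g i) -> fsum N f <= fsum N g.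
Proof. induction N; simpl; intros; [lra|]. pose proof (H N ltac:(lia)). pose proof (IHN ltac:(intros; apply H; lia)). lra. Qed.

Lemma fsum_nonneg N f : (forall i, (i < N)%nat -> 0 <= f i) -> 0 <= fsum N f.
Proof. intros. replace 0 with (fsum N (fun _ => 0)). apply fsum_le; auto. rewrite fsum_const; lra. Qed.

Lemma fsum_term N f i : (i < N)%nat -> (forall j, (j < N)%nat -> 0 <= f j) -> f i <= fsum N f.
Proof. induction N; simpl; intros; [lia|]. destruct (Nat.eq_dec i N).
 - subst. pose proof (fsum_nonneg N f ltac:(intros; apply H0; lia)). lra.
 - pose proof (IHN ltac:(lia) ltac:(intros; apply H0; lia)). pose proof (H0 N ltac:(lia)). lra. Qed.

Lemma coord_le_dist N x y i : (i < N)%nat -> Rabs (x i - y i) <= dist N x y.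
Proof. intros. unfold dist. rewrite <- sqrt_Rsqr_abs. apply sqrt_le_1_alt.
 unfold Rsqr. replace ((x i - y i) * (x i - y i)) with ((x i - y i)^2) by ring.
 apply (fsum_term N (fun i => (x i - y i)^2)); auto. intros; apply pow2_ge_0. Qed.

Lemma fsum_sq_le N f : fsum N (fun i => (f i)^2) <= (fsum N (fun i => Rabs (f i)))^2.
Proof. induction N; simpl; [lra|].
 pose proof (fsum_nonneg N (fun i => Rabs (f i)) ltac:(intros; apply Rabs_pos)).
 pose proof (Rabs_pos (f N)). replace (f N * (f N * 1)) with (Rabs (f N) * Rabs (f N)).
 2:{ rewrite <- Rabs_mult. rewrite Rabs_right. ring. nra. }
 simpl in IHN. nra. Qed.

Lemma dist_le_sum N x y : dist N x y <= fsum N (fun i => Rabs (x i - y i)).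
Proof. unfold dist. rewrite <- (sqrt_pow2 (fsum N (fun i => Rabs (x i - y i)))).
 apply sqrt_le_1_alt. apply (fsum_sq_le N (fun i => x i - y i)).
 apply fsum_nonneg; intros; apply Rabs_pos. Qed.

Lemma dist_small N x y e : (forall i, (i < N)%nat -> Rabs (x i - y i) <= e) -> dist N x y <= INR N * e.
Proof. intros. eapply Rle_trans. apply dist_le_sum. rewrite <- fsum_const. apply fsum_le; auto. Qed.

Lemma dist_sym N x y : dist N x y = dist N y x.
Proof. unfold dist. f_equal. apply fsum_ext; intros; ring. Qed.

Lemma dist_refl N x : dist N x x = 0.
Proof. unfold dist. rewrite (fsum_ext N _ (fun _ => 0)). rewrite fsum_const, Rmult_0_r; apply sqrt_0. intros; ring. Qed.

Lemma dist_upd N x i t : dist N x (upd x i t) <= INR N * Rabs t.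
Proof. apply dist_small. intros j _. unfold upd. destruct (Nat.eqb j i).
 replace (x j - (x j + t)) with (- t) by ring. rewrite Rabs_Ropp; lra.
 rewrite Rminus_diag, Rabs_R0. apply Rabs_pos. Qed.

Lemma dist_nonneg N x y : 0 <= dist N x y.
Proof. apply sqrt_pos. Qed.

Definition incr (phi : nat -> nat) := forall k, (phi k < phi (S k))%nat.

Lemma incr_ge phi : incr phi -> forall k, (k <= phi k)%nat.
Proof. intros H k; induction k; [lia|]. specialize (H k); lia. Qed.

Lemma incr_mono phi : incr phi -> forall a b, (a <= b)%nat -> (phi a <= phi b)%nat.
Proof. intros H a b Hab; induction Hab; [lia|]. specialize (H m); lia. Qed.

Lemma incr_comp phi psi : incr phi -> incr psi -> incr (fun k => phi (psi k)).
Proof. intros H1 H2 k. pose proof (H2 k). pose proof (incr_mono phi H1 (S (psi k)) (psi (S k)) ltac:(lia)).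
 specialize (H1 (psi k)). lia. Qed.

Lemma subseq_cv (v : nat -> R) l phi : incr phi -> Un_cv v l -> Un_cv (fun k => v (phi k)) l.
Proof. intros Hp Hv eps He. destruct (Hv eps He) as [N HN]. exists N. intros k Hk.
 apply HN. pose proof (incr_ge phi Hp k). lia. Qed.

Lemma extract1 (u : nat -> R) B : (forall j, Rabs (u j) <= B) ->
  exists phi, incr phi /\ exists l, Un_cv (fun k => u (phi k)) l.
Proof.
 intros HB. destruct (Bolzano_Weierstrass u (fun c => -B <= c <= B) (compact_P3 (-B) B)) as [l Hl].
 { intros j. specialize (HB j). unfold Rabs in HB; destruct (Rcase_abs (u j)); lra. }
 assert (Hnext : forall N k : nat, exists p, (N <= p)%nat /\ Rabs (u p - l) < / (INR k + 1)).
 { intros N k. assert (Hpos : 0 < / (INR k + 1)). { apply Rinv_0_lt_compat. pose proof (pos_INR k). lra. }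
   destruct (Hl (fun y => Rabs (y - l) < / (INR k + 1)) N) as [p Hp].
   - exists (mkposreal _ Hpos). intros y Hy. unfold disc in Hy. simpl in Hy. exact Hy.
   - exists p; exact Hp. }
 set (f := fun N k => proj1_sig (constructive_indefinite_description _ (Hnext N k))).
 assert (Hf : forall N k, (N <= f N k)%nat /\ Rabs (u (f N k) - l) < / (INR k + 1)).
 { intros. unfold f. destruct (constructive_indefinite_description _ (Hnext N k)); auto. }
 set (phi := fix g k := match k with O => f O O | S k' => f (S (g k')) (S k') end).
 exists phi. split.
 - intros k. simpl. destruct (Hf (S (phi k)) (S k)). exact H.
 - exists l. intros eps He. destruct (archimed (/ eps)) as [Ha _].
   assert (Hz: (0 <= up (/ eps))%Z). { apply le_IZR. pose proof (Rinv_0_lt_compat eps He). lra. }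
   exists (Z.to_nat (up (/ eps))). intros k Hk. unfold Rdist.
   assert (Hk' : Rabs (u (phi k) - l) < / (INR k + 1)).
   { destruct k; simpl. apply (Hf O O). apply (Hf _ (S k)). }
   eapply Rlt_le_trans; [exact Hk'|].
   apply le_INR in Hk. rewrite INR_IZR_INZ, Z2Nat.id in Hk by auto.
   rewrite <- (Rinv_inv eps). apply Rinv_le_contravar. apply Rinv_0_lt_compat; auto. lra.
Qed.

Lemma extractN N (p : nat -> pt) B : (forall j i, (i < N)%nat -> Rabs (p j i) <= B) ->
  exists phi, incr phi /\ exists q : pt, forall i, (i < N)%nat -> Un_cv (fun k => p (phi k) i) (q i).
Proof.
 induction N; intros HB.
 - exists (fun k => k). split. intros k; lia. exists (fun _ => 0). intros; lia.
 - destruct IHN as [phi [Hphi [q Hq]]]. intros; apply HB; lia.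
   destruct (extract1 (fun k => p (phi k) N) B) as [psi [Hpsi [l Hl]]]. intros; apply HB; lia.
   exists (fun k => phi (psi k)). split. apply incr_comp; auto.
   exists (fun i => if Nat.eq_dec i N then l else q i). intros i Hi.
   destruct (Nat.eq_dec i N). subst; auto.
   apply (subseq_cv (fun k => p (phi k) i)); auto. apply Hq; lia.
Qed.

Lemma dpl_shift f t l : derivable_pt_lim (fun s => f (t + s)) 0 l -> derivable_pt_lim f t l.
Proof. intros H eps He. destruct (H eps He) as [d Hd]. exists d. intros h Hh Hh'.
 specialize (Hd h Hh Hh'). rewrite !Rplus_0_l, Rplus_0_r in Hd. exact Hd. Qed.

Lemma upd_upd x i t s : upd (upd x i t) i s = upd x i (t + s).
Proof. apply functional_extensionality; intro j. unfold upd. destruct (Nat.eqb j i); ring. Qed.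

Lemma partial_shift f i x t l : partial_at f i (upd x i t) l -> derivable_pt_lim (fun t => f (upd x i t)) t l.
Proof. unfold partial_at. intros H. apply dpl_shift. eapply derivable_pt_lim_ext; [|exact H].
 intro s; simpl. rewrite upd_upd; auto. Qed.

Lemma upd0 x i : upd x i 0 = x.
Proof. apply functional_extensionality; intro j. unfold upd. destruct (Nat.eqb j i); ring. Qed.

Lemma small_pos e d : 0 < e -> 0 < d -> exists h, 0 < h /\ h < e /\ h < d.
Proof. intros. exists (Rmin (e/2) (d/2)). pose proof (Rmin_l (e/2) (d/2)). pose proof (Rmin_r (e/2) (d/2)).
 split; [apply Rmin_case; lra|lra]. Qed.

Lemma max_d0 g d D : 0 < d -> (forall t, Rabs t < d -> g t <= g 0) -> derivable_pt_lim g 0 D -> D = 0.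
Proof. intros Hd Hm H. destruct (Rtotal_order D 0) as [Hl|[He|Hg]]; auto; exfalso.
 - destruct (H (- D / 2) ltac:(lra)) as [e He]. destruct (small_pos e d (cond_pos e) Hd) as [h [H1 [H2 H3]]].
   assert (Ha : Rabs (-h) = h) by (rewrite Rabs_Ropp; apply Rabs_right; lra).
   specialize (He (-h) ltac:(lra) ltac:(lra)). specialize (Hm (-h) ltac:(lra)). rewrite Rplus_0_l in He.
   apply Rabs_def2 in He. destruct He as [He1 He2].
   assert ((g (-h) - g 0) / (-h) >= 0). { unfold Rdiv. replace ((g (-h) - g 0) * / (-h)) with ((g 0 - g (-h)) * / h).
     apply Rle_ge, Rmult_le_pos. lra. left; apply Rinv_0_lt_compat; lra. field; lra. } lra.
 - destruct (H (D / 2) ltac:(lra)) as [e He]. destruct (small_pos e d (cond_pos e) Hd) as [h [H1 [H2 H3]]].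
   assert (Ha : Rabs h = h) by (apply Rabs_right; lra).
   specialize (He h ltac:(lra) ltac:(lra)). specialize (Hm h ltac:(lra)). rewrite Rplus_0_l in He.
   apply Rabs_def2 in He. destruct He as [He1 He2].
   assert ((g h - g 0) / h <= 0). { unfold Rdiv. replace ((g h - g 0) * / h) with (- ((g 0 - g h) * / h)) by ring.
     apply Ropp_le_cancel. rewrite Ropp_involutive, Ropp_0. apply Rmult_le_pos. lra. left; apply Rinv_0_lt_compat; lra. } lra.
Qed.

Lemma max2 g g1 d D : 0 < d -> (forall t, Rabs t < d -> derivable_pt_lim g t (g1 t)) ->
  derivable_pt_lim g1 0 D -> (forall t, Rabs t < d -> g t <= g 0) -> D <= 0.
Proof. intros Hd Hg Hg1 Hm. assert (H0 : g1 0 = 0).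
 { apply (max_d0 g d); auto. apply Hg. rewrite Rabs_R0; lra. }
 destruct (Rle_lt_dec D 0) as [|HD]; auto. exfalso.
 destruct (Hg1 (D/2) ltac:(lra)) as [e He]. destruct (small_pos e d (cond_pos e) Hd) as [t [H1 [H2 H3]]].
 assert (Hpos : forall c, 0 < c <= t -> 0 < g1 c).
 { intros c Hc. specialize (He c ltac:(lra) ltac:(rewrite Rabs_right; lra)). rewrite Rplus_0_l, H0 in He.
   apply Rabs_def2 in He. destruct He as [_ He1]. unfold Rdiv in He1. rewrite Rminus_0_r in He1.
   assert (0 < g1 c * / c) by lra. apply Rmult_lt_reg_r with (/ c). apply Rinv_0_lt_compat; lra. lra. }
 destruct (MVT_cor2 g g1 0 t H1) as [c [Hc1 Hc2]].
 { intros c Hc. apply Hg. rewrite Rabs_right; lra. }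
 specialize (Hpos c ltac:(lra)). specialize (Hm t ltac:(rewrite Rabs_right; lra)).
 rewrite Rminus_0_r in Hc1. assert (0 < g1 c * t) by (apply Rmult_lt_0_compat; lra). lra.
Qed.

Lemma dpl_right g D : derivable_pt_lim g 0 D -> right_deriv g 0 D.
Proof. intros H eps He. destruct (H eps He) as [d Hd]. exists d. split. apply cond_pos.
 intros h Hh. apply Hd. lra. rewrite Rabs_right; lra. Qed.

Lemma right_plus f g a D1 D2 : right_deriv f a D1 -> right_deriv g a D2 ->
  right_deriv (fun x => f x + g x) a (D1 + D2).
Proof. intros H1 H2 eps He. destruct (H1 (eps/2) ltac:(lra)) as [d1 [Hd1 P1]].
 destruct (H2 (eps/2) ltac:(lra)) as [d2 [Hd2 P2]]. exists (Rmin d1 d2). split. apply Rmin_case; lra.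
 intros h Hh. pose proof (Rmin_l d1 d2). pose proof (Rmin_r d1 d2).
 specialize (P1 h ltac:(lra)). specialize (P2 h ltac:(lra)).
 replace ((f (a + h) + g (a + h) - (f a + g a)) / h - (D1 + D2)) with
   (((f (a + h) - f a) / h - D1) + ((g (a + h) - g a) / h - D2)) by (field; lra).
 eapply Rle_lt_trans. apply Rabs_triang. lra. Qed.

Lemma right_opp f a D : right_deriv f a D -> right_deriv (fun x => - f x) a (- D).
Proof. intros H eps He. destruct (H eps He) as [d [Hd P]]. exists d. split; auto. intros h Hh.
 specialize (P h Hh). replace ((- f (a + h) - - f a) / h - - D) with (- ((f (a + h) - f a) / h - D)) by (field; lra).
 rewrite Rabs_Ropp; auto. Qed.

Lemma right_pos g D : right_deriv g 0 D -> 0 < D -> forall d, 0 < d -> exists h, 0 < h < d /\ g 0 < g h.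
Proof. intros H HD d Hd. destruct (H (D/2) ltac:(lra)) as [e [He P]]. destruct (small_pos e d He Hd) as [h [H1 [H2 H3]]].
 exists h. split. lra. specialize (P h ltac:(lra)). rewrite Rplus_0_l in P. apply Rabs_def2 in P. destruct P as [_ P1].
 assert (0 < (g h - g 0) / h) by lra. unfold Rdiv in H0.
 assert (0 < g h - g 0). { apply Rmult_lt_reg_r with (/ h). apply Rinv_0_lt_compat; lra. lra. } lra. Qed.

Lemma ext_trunc n p : inRn (S n) p -> p = ext n (trunc n p) (p n).
Proof. intros Hp. apply functional_extensionality; intro i. unfold ext, trunc.
 destruct (Nat.ltb_spec i n). auto. destruct (Nat.eqb_spec i n). subst; auto. apply Hp; lia. Qed.

Lemma trunc_ext n x l : inRn n x -> trunc n (ext n x l) = x.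
Proof. intros Hx. apply functional_extensionality; intro i. unfold ext, trunc.
 destruct (Nat.ltb_spec i n). auto. symmetry; apply Hx; lia. Qed.

Lemma ext_n n x l : ext n x l n = l.
Proof. unfold ext. rewrite Nat.ltb_irrefl, Nat.eqb_refl. auto. Qed.

Lemma ext_lt n x l i : (i < n)%nat -> ext n x l i = x i.
Proof. intros. unfold ext. destruct (Nat.ltb_spec i n); [auto|lia]. Qed.

Lemma ext_inRn n x l : inRn (S n) (ext n x l).
Proof. intros i Hi. unfold ext. destruct (Nat.ltb_spec i n); [lia|]. destruct (Nat.eqb_spec i n); [lia|auto]. Qed.

Lemma Omega_ext n H x l : H x -> inRn n x -> 0 < l -> Omega n H (ext n x l).
Proof. intros. split. apply ext_inRn. rewrite trunc_ext by auto. split; auto. rewrite ext_n; auto. Qed.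

Lemma closure_self N S y : inRn N y -> S y -> closure N S y.
Proof. intros. split; auto. intros r Hr. exists y. rewrite dist_refl. auto. Qed.

Lemma Omega_inRn n H y : Omega n H y -> inRn (S n) y.
Proof. intros [? _]; auto. Qed.

Lemma fsum_le_S n f : (forall i, (i <= n)%nat -> 0 <= f i) -> fsum n f <= fsum (S n) f.
Proof. intros. simpl. pose proof (H n ltac:(lia)). lra. Qed.

Lemma dist_trunc n x y : dist n (trunc n x) (trunc n y) <= dist (S n) x y.
Proof. unfold dist. apply sqrt_le_1_alt. rewrite (fsum_ext n _ (fun i => (x i - y i)^2)).
 apply fsum_le_S. intros; apply pow2_ge_0. intros i Hi. unfold trunc. destruct (Nat.ltb_spec i n); [auto|lia]. Qed.

Lemma closure_Omega n H p : closure (S n) (Omega n H) p -> closure n H (trunc n p) /\ 0 <= p n.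
Proof. intros [Hp Hc]. split.
 - split. intros i Hi. unfold trunc. destruct (Nat.ltb_spec i n); [lia|auto].
   intros r Hr. destruct (Hc r Hr) as [z [[Hz1 [Hz2 Hz3]] Hd]]. exists (trunc n z). split; auto.
   eapply Rle_lt_trans. apply dist_trunc. auto.
 - destruct (Rle_lt_dec 0 (p n)); auto. exfalso. destruct (Hc (- p n) ltac:(lra)) as [z [[_ [_ Hz]] Hd]].
   pose proof (coord_le_dist (S n) z p n ltac:(lia)). unfold Rabs in H0. destruct (Rcase_abs (z n - p n)); lra. Qed.

Lemma closure_bound n H : bounded_set n H -> exists B, 0 <= B /\ forall x, closure n H x -> forall i, (i < n)%nat -> Rabs (x i) <= B.
Proof. intros [M HM]. exists (Rabs M). split. apply Rabs_pos. intros x [Hx Hc] i Hi.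
 apply Rnot_lt_le; intro Hlt. destruct (Hc (Rabs (x i) - Rabs M) ltac:(lra)) as [z [Hz Hd]].
 pose proof (HM z Hz). pose proof (coord_le_dist n z origin i Hi). pose proof (coord_le_dist n z x i Hi).
 unfold origin in H1. rewrite Rminus_0_r in H1. pose proof (Rle_abs M).
 pose proof (Rabs_triang_inv (x i) (z i)). rewrite <- Rabs_Ropp in H2. replace (- (z i - x i)) with (x i - z i) in H2 by ring.
 unfold origin in H0. lra. Qed.

Lemma dist_tri N x y z : dist N x z <= INR N * (dist N x y + dist N y z).
Proof. apply dist_small. intros i Hi. pose proof (coord_le_dist N x y i Hi). pose proof (coord_le_dist N y z i Hi).
 replace (x i - z i) with ((x i - y i) + (y i - z i)) by ring. eapply Rle_trans. apply Rabs_triang. lra. Qed.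

Lemma cv_uniform N (f : nat -> nat -> R) (l : nat -> R) : (forall i, (i < N)%nat -> Un_cv (fun k => f k i) (l i)) ->
  forall e, 0 < e -> exists K, forall k, (K <= k)%nat -> forall i, (i < N)%nat -> Rabs (f k i - l i) < e.
Proof. induction N; intros Hc e He. exists O; intros; lia.
 destruct (IHN ltac:(intros; apply Hc; lia) e He) as [K1 HK1]. destruct (Hc N ltac:(lia) e He) as [K2 HK2].
 exists (max K1 K2). intros k Hk i Hi. destruct (Nat.eq_dec i N). subst. apply HK2; lia. apply HK1; lia. Qed.

Lemma dist_cv N (p : nat -> pt) q : (forall i, (i < N)%nat -> Un_cv (fun k => p k i) (q i)) ->
  forall e, 0 < e -> exists K, forall k, (K <= k)%nat -> dist N (p k) q < e.
Proof. intros Hc e He. assert (He' : 0 < e / (INR N + 1)). { apply Rdiv_lt_0_compat; auto. pose proof (pos_INR N); lra. }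
 destruct (cv_uniform N p q Hc _ He') as [K HK]. exists K. intros k Hk.
 eapply Rle_lt_trans. apply dist_small. intros; left; apply HK; eauto.
 pose proof (pos_INR N). apply Rmult_lt_reg_r with (INR N + 1). lra.
 replace (INR N * (e / (INR N + 1)) * (INR N + 1)) with (INR N * e) by (field; lra). nra. Qed.

Lemma closure_closed N S (p : nat -> pt) q : (forall k, closure N S (p k)) -> inRn N q ->
  (forall i, (i < N)%nat -> Un_cv (fun k => p k i) (q i)) -> closure N S q.
Proof. intros Hp Hq Hc. split; auto. intros r Hr.
 set (e := r / (2 * (INR N + 1))). assert (He : 0 < e). { unfold e. apply Rdiv_lt_0_compat; auto. pose proof (pos_INR N); lra. }
 destruct (dist_cv N p q Hc e He) as [K HK]. specialize (HK K (le_n K)).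
 destruct (proj2 (Hp K) e He) as [z [Hz Hd]]. exists z. split; auto.
 eapply Rle_lt_trans. apply (dist_tri N z (p K) q). pose proof (pos_INR N).
 apply Rle_lt_trans with (INR N * (2 * e)). apply Rmult_le_compat_l; lra.
 unfold e. replace (INR N * (2 * (r / (2 * (INR N + 1))))) with (r * (INR N / (INR N + 1))) by (field; lra).
 assert (INR N / (INR N + 1) < 1). { apply Rmult_lt_reg_r with (INR N + 1). lra. unfold Rdiv. rewrite Rmult_assoc, Rinv_l; lra. }
 nra. Qed.

Lemma cont_cv N S f (p : nat -> pt) q : cont_on N S f -> (forall k, S (p k)) -> S q ->
  (forall i, (i < N)%nat -> Un_cv (fun k => p k i) (q i)) -> Un_cv (fun k => f (p k)) (f q).
Proof. intros Hf Hp Hq Hc e He. destruct (Hf q Hq e He) as [d [Hd P]]. destruct (dist_cv N p q Hc d Hd) as [K HK].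
 exists K. intros k Hk. unfold Rdist. apply P; auto. rewrite dist_sym; auto. Qed.

Lemma cv_le (u : nat -> R) l L : Un_cv u l -> (forall k, u k <= L) -> l <= L.
Proof. intros Hu HL. apply Rnot_lt_le; intro Hlt. destruct (Hu (l - L) ltac:(lra)) as [K HK].
 specialize (HK K (le_n K)). specialize (HL K). unfold Rdist in HK. unfold Rabs in HK. destruct (Rcase_abs (u K - l)); lra. Qed.

Lemma max_exists N (K : pt -> Prop) (W : pt -> R) B Mw y0 :
  (forall y, K y -> inRn N y /\ forall i, (i < N)%nat -> Rabs (y i) <= B) ->
  (forall (p : nat -> pt) q, (forall k, K (p k)) -> inRn N q -> (forall i, (i < N)%nat -> Un_cv (fun k => p k i) (q i)) ->
     K q /\ Un_cv (fun k => W (p k)) (W q)) ->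
  (forall y, K y -> W y <= Mw) -> K y0 ->
  exists q, K q /\ forall y, K y -> W y <= W q.
Proof.
 intros HB Hcl HM Hy0.
 destruct (completeness (fun r => exists y, K y /\ r = W y)) as [S [HS1 HS2]].
 { exists Mw. intros r [y [Hy ->]]. auto. } { exists (W y0). eauto. }
 assert (Hj : forall j : nat, exists y, K y /\ S - / (INR j + 1) < W y).
 { intros j. apply NNPP; intro Hn. assert (Hpos : 0 < / (INR j + 1)) by (apply Rinv_0_lt_compat; pose proof (pos_INR j); lra).
   assert (S <= S - / (INR j + 1)). { apply HS2. intros r [y [Hy ->]]. apply Rnot_lt_le. intro; apply Hn; eauto. } lra. }
 set (p := fun j => proj1_sig (constructive_indefinite_description _ (Hj j))).
 assert (Hp : forall j, K (p j) /\ S - / (INR j + 1) < W (p j)).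
 { intros j. unfold p. destruct (constructive_indefinite_description _ (Hj j)); auto. }
 destruct (extractN N p B) as [phi [Hphi [q0 Hq0]]]. { intros j i Hi. apply (proj2 (HB _ (proj1 (Hp j)))); auto. }
 set (q := fun i => if Nat.ltb i N then q0 i else 0).
 assert (Hq : inRn N q). { intros i Hi. unfold q. destruct (Nat.ltb_spec i N); [lia|auto]. }
 assert (Hcv : forall i, (i < N)%nat -> Un_cv (fun k => p (phi k) i) (q i)).
 { intros i Hi. unfold q. destruct (Nat.ltb_spec i N); [auto|lia]. }
 destruct (Hcl (fun k => p (phi k)) q ltac:(intros; apply Hp) Hq Hcv) as [HKq HWq].
 exists q. split; auto. intros y Hy. apply Rle_trans with S. apply HS1; eauto.
 apply Rnot_lt_le; intro Hlt. destruct (HWq ((S - W q)/2) ltac:(lra)) as [K0 HK0].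
 destruct (archimed (2 / (S - W q))) as [Ha _].
 set (k := max K0 (Z.to_nat (up (2 / (S - W q))))).
 specialize (HK0 k ltac:(unfold k; lia)). unfold Rdist in HK0.
 pose proof (proj2 (Hp (phi k))) as Hpk. pose proof (incr_ge phi Hphi k) as Hge.
 assert (Hk : 2 / (S - W q) <= INR (phi k)).
 { apply Rle_trans with (IZR (up (2 / (S - W q)))). lra.
   assert (0 <= up (2 / (S - W q)))%Z. { apply le_IZR. assert (0 < 2 / (S - W q)) by (apply Rdiv_lt_0_compat; lra). lra. }
   rewrite <- (Z2Nat.id (up _)) by auto. rewrite <- INR_IZR_INZ. apply le_INR. unfold k in *. lia. }
 assert (Hinv : / (INR (phi k) + 1) < (S - W q) / 2).
 { assert (0 < S - W q) by lra. apply Rlt_le_trans with (/ (2 / (S - W q))).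
   apply Rinv_lt_contravar. apply Rmult_lt_0_compat. apply Rdiv_lt_0_compat; lra. pose proof (pos_INR (phi k)); lra. lra.
   right. field. lra. }
 unfold Rabs in HK0. destruct (Rcase_abs (W (p (phi k)) - W q)); lra.
Qed.

Lemma cv_const c : Un_cv (fun _ => c) c.
Proof. intros e He. exists O. intros. unfold Rdist. rewrite Rminus_diag, Rabs_R0; auto. Qed.

Lemma cv_ext u v l : (forall k, u k = v k) -> Un_cv u l -> Un_cv v l.
Proof. intros Heq Hu e He. destruct (Hu e He) as [K HK]. exists K. intros k Hk. rewrite <- Heq. auto. Qed.

Lemma fsum_sq_cv N (p : nat -> pt) q : (forall i, (i < N)%nat -> Un_cv (fun k => p k i) (q i)) ->
  Un_cv (fun k => fsum N (fun i => p k i ^ 2)) (fsum N (fun i => q i ^ 2)).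
Proof. induction N; intros Hc; simpl. apply cv_const.
 apply CV_plus. apply IHN; intros; apply Hc; lia.
 apply CV_mult. apply Hc; lia. apply CV_mult. apply Hc; lia. apply cv_const. Qed.

Lemma upd_self x i t : upd x i t i = x i + t.
Proof. unfold upd. rewrite Nat.eqb_refl; auto. Qed.

Lemma upd_other x i t j : j <> i -> upd x i t j = x j.
Proof. intros. unfold upd. destruct (Nat.eqb_spec j i); [lia|auto]. Qed.

Lemma s_upd_gen N p i t : fsum N (fun j => (upd p i t j)^2) =
  fsum N (fun j => p j ^2) + (if Nat.ltb i N then (p i + t)^2 - p i^2 else 0).
Proof. induction N. simpl; lra. change (fsum (S N) ?f) with (fsum N f + f N). rewrite IHN.
 destruct (Nat.eq_dec N i). subst. rewrite upd_self. destruct (Nat.ltb_spec i i); [lia|]. destruct (Nat.ltb_spec i (S i)); [|lia]. lra.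
 rewrite upd_other by auto. destruct (Nat.ltb_spec i N); destruct (Nat.ltb_spec i (S N)); try lia; lra. Qed.

Lemma s_upd_lt n p i t : (i < n)%nat -> fsum n (fun j => (upd p i t j)^2) = fsum n (fun j => p j ^2) + ((p i + t)^2 - p i^2).
Proof. intros. rewrite s_upd_gen. destruct (Nat.ltb_spec i n); [auto|lia]. Qed.

Lemma s_upd_n n p t : fsum n (fun j => (upd p n t j)^2) = fsum n (fun j => p j ^2).
Proof. rewrite s_upd_gen. destruct (Nat.ltb_spec n n); [lia|lra]. Qed.

Lemma clos_bound N S f M : (forall y, S y -> inRn N y) -> cont_on N (closure N S) f -> (forall y, S y -> Rabs (f y) <= M) ->
  forall y, closure N S y -> Rabs (f y) <= M + 1.
Proof. intros HS Hc HM y Hy. destruct (Hc y Hy 1 ltac:(lra)) as [d [Hd P]].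
 destruct (proj2 Hy d Hd) as [z [Hz Hdz]]. specialize (P z (closure_self N S z (HS z Hz) Hz) ltac:(rewrite dist_sym; auto)).
 specialize (HM z Hz). pose proof (Rabs_triang_inv (f y) (f z)). rewrite <- Rabs_Ropp in P.
 replace (- (f z - f y)) with (f y - f z) in P by ring. lra. Qed.

Lemma ext0_closure n H x : H x -> inRn n x -> closure (S n) (Omega n H) (ext n x 0).
Proof. intros Hx Hin. split. apply ext_inRn. intros r Hr.
 set (l := r / (2 * (INR (S n) + 1))). assert (Hl : 0 < l) by (unfold l; apply Rdiv_lt_0_compat; pose proof (pos_INR (S n)); lra).
 exists (ext n x l). split. apply Omega_ext; auto.
 eapply Rle_lt_trans. apply (dist_small _ _ _ l). intros i Hi. unfold ext. destruct (Nat.ltb i n). rewrite Rminus_diag, Rabs_R0; lra.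
 destruct (Nat.eqb i n). rewrite Rminus_0_r, Rabs_right; lra. rewrite Rminus_diag, Rabs_R0; lra.
 unfold l. pose proof (pos_INR (S n)). replace (INR (S n) * (r / (2 * (INR (S n) + 1)))) with (r * (INR (S n) / (2 * (INR (S n) + 1)))) by (field; lra).
 assert (INR (S n) / (2 * (INR (S n) + 1)) < 1). { apply Rmult_lt_reg_r with (2 * (INR (S n) + 1)). lra. unfold Rdiv. rewrite Rmult_assoc, Rinv_l; lra. }
 nra. Qed.

Lemma right_ext f g a D : (forall t, f t = g t) -> right_deriv f a D -> right_deriv g a D.
Proof. intros Heq H e He. destruct (H e He) as [d [Hd P]]. exists d. split; auto. intros h Hh. rewrite <- !Heq. auto. Qed.

Lemma ge_lt_d1 C a pn L R2 sp pi eps t :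
  derivable_pt_lim (fun t => - (C * exp (a * (pn - L)) * (2*R2 - (sp + ((pi + t)^2 - pi^2)))) + eps * ((sp + ((pi + t)^2 - pi^2)) + (1 - exp (- pn)))) t
   (C * exp (a * (pn - L)) * (2 * (pi + t)) + eps * (2 * (pi + t))).
Proof. apply is_derive_Reals. auto_derive; auto. unfold Rminus; ring. Qed.

Lemma ge_lt_d2 C a pn L pi eps :
  derivable_pt_lim (fun t => C * exp (a * (pn - L)) * (2 * (pi + t)) + eps * (2 * (pi + t))) 0
   (2 * C * exp (a * (pn - L)) + 2 * eps).
Proof. apply is_derive_Reals. auto_derive; auto. unfold Rminus; ring. Qed.

Lemma ge_n_d1 C a pn L R2 sp eps t :
  derivable_pt_lim (fun t => - (C * exp (a * (pn + t - L)) * (2*R2 - sp)) + eps * (sp + (1 - exp (- (pn + t))))) t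
   (- (C * (a * exp (a * (pn + t - L))) * (2*R2 - sp)) + eps * exp (- (pn + t))).
Proof. apply is_derive_Reals. auto_derive; auto. unfold Rminus; ring. Qed.

Lemma ge_n_d2 C a pn L R2 sp eps :
  derivable_pt_lim (fun t => - (C * (a * exp (a * (pn + t - L))) * (2*R2 - sp)) + eps * exp (- (pn + t))) 0
   (- (C * (a * (a * exp (a * (pn - L)))) * (2*R2 - sp)) - eps * exp (- pn)).
Proof. apply is_derive_Reals. auto_derive; auto. unfold Rminus; rewrite !Rplus_0_r. ring. Qed.

Lemma ge_n_d0 C a L R2 sp eps :
  derivable_pt_lim (fun t => - (C * exp (a * (t - L)) * (2*R2 - sp)) + eps * (sp + (1 - exp (- t)))) 0
   (- (C * (a * exp (a * (- L))) * (2*R2 - sp)) + eps).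
Proof. apply is_derive_Reals. auto_derive; auto. rewrite Ropp_0, exp_0, Rplus_0_l. ring. Qed.

Theorem mainTheorem8 (n : nat) (H : pt -> Prop) (phi u1 u2 w1 w2 : pt -> R) :
  (1 <= n)%nat ->
  bounded_domain n H ->
  C2_on n H u1 -> C2_on n H u2 ->
  cont_on n (closure n H) u1 -> cont_on n (closure n H) u2 ->
  bounded_on (closure n H) u1 -> bounded_on (closure n H) u2 ->
  (forall x, boundary n H x -> u1 x = phi x /\ u2 x = phi x) ->
  DtN n H phi u1 w1 -> DtN n H phi u2 w2 ->
  (forall x, H x -> w1 x <= w2 x) ->
  forall x, H x -> u1 x <= u2 x.
Proof.
 intros Hn [HHopen [_ [_ Hbd]]] _ _ _ _ _ _ _
   [v1 [Hh1 [Hb1 [Hc1 [Hu1 [Hl1 Hr1]]]]]] [v2 [Hh2 [Hb2 [Hc2 [Hu2 [Hl2 Hr2]]]]]] Hw x0 Hx0.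
 apply Rnot_lt_le; intro Hlt. set (m := u1 x0 - u2 x0). assert (Hm : 0 < m) by (unfold m; lra).
 assert (Hin : forall x, H x -> inRn n x) by apply HHopen.
 assert (HOin : forall y, Omega n H y -> inRn (S n) y) by apply Omega_inRn.
 destruct Hb1 as [M1 HM1]. destruct Hb2 as [M2 HM2].
 pose proof (clos_bound _ _ _ _ HOin Hc1 HM1) as HB1. pose proof (clos_bound _ _ _ _ HOin Hc2 HM2) as HB2.
 set (MV := Rabs M1 + Rabs M2 + 3).
 assert (HMV1 : 1 <= MV) by (unfold MV; pose proof (Rabs_pos M1); pose proof (Rabs_pos M2); lra).
 assert (HV : forall y, closure (S n) (Omega n H) y -> Rabs (v1 y - v2 y) <= MV).
 { intros y Hy. specialize (HB1 y Hy). specialize (HB2 y Hy). pose proof (Rle_abs M1). pose proof (Rle_abs M2).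
   unfold Rminus. eapply Rle_trans. apply Rabs_triang. rewrite Rabs_Ropp. unfold MV. lra. }
 destruct (closure_bound n H Hbd) as [B [HB0 HB]].
 set (sp := fun y : pt => fsum n (fun i => y i ^ 2)).
 set (R2 := INR n * B ^ 2 + 1).
 assert (HR2 : 1 <= R2). { unfold R2. pose proof (pos_INR n). pose proof (pow2_ge_0 B). nra. }
 assert (Hsp0 : forall y, 0 <= sp y). { intros y. apply fsum_nonneg. intros; apply pow2_ge_0. }
 assert (HspB : forall y, closure n H (trunc n y) -> sp y <= R2 - 1).
 { intros y Hy. unfold sp, R2. replace (INR n * B ^ 2 + 1 - 1) with (INR n * B^2) by ring. rewrite <- fsum_const. apply fsum_le.
   intros i Hi. specialize (HB _ Hy i Hi). unfold trunc in HB. destruct (Nat.ltb_spec i n); [|lia].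
   rewrite <- (pow2_abs (y i)). pose proof (Rabs_pos (y i)). apply pow_incr. lra. }
 set (a := / R2). assert (Ha : 0 < a /\ a <= 1 /\ a * R2 = 1).
 { unfold a. split. apply Rinv_0_lt_compat; lra. split. rewrite <- Rinv_1. apply Rinv_le_contravar; lra. field; lra. }
 set (C := MV / R2). assert (HC : 0 < C /\ C * R2 = MV). { unfold C. split. apply Rdiv_lt_0_compat; lra. field; lra. }
 set (eps := m / (2 * (R2 + 2))). assert (Heps : 0 < eps /\ eps * (R2 + 2) = m / 2).
 { unfold eps. split. apply Rdiv_lt_0_compat; lra. field; lra. }
 set (L := 2 * MV * (a + 1) / (eps * a) + 1).
 assert (HL : 0 < L). { unfold L. assert (0 <= 2 * MV * (a + 1) / (eps * a)). { apply Rle_mult_inv_pos. nra. nra. } lra. }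
 assert (E0 : 2 * MV * exp (- (a * L)) * (a + 1) < eps).
 { pose proof (exp_ineq1 (a * L) ltac:(nra)). assert (Hel : 0 < exp (a * L)) by apply exp_pos.
   rewrite exp_Ropp. assert (2 * MV * (a + 1) < eps * exp (a * L)).
   { assert (a * L = 2 * MV * (a + 1) / eps + a). { unfold L. field. lra. }
     assert (2 * MV * (a + 1) = eps * (2 * MV * (a + 1) / eps)) by (field; lra). nra. }
   apply Rmult_lt_reg_r with (exp (a * L)); auto. replace (2 * MV * / exp (a * L) * (a + 1) * exp (a * L)) with (2 * MV * (a + 1)) by (field; lra). lra. }
 set (hF := fun y : pt => C * exp (a * (y n - L)) * (2 * R2 - sp y)).
 set (psi := fun y : pt => sp y + (1 - exp (- y n))).
 set (W := fun y : pt => (v1 y - v2 y) + (- hF y + eps * psi y)).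
 set (K := fun y => closure (S n) (Omega n H) y /\ y n <= L).

 assert (HK : forall y, K y -> closure n H (trunc n y) /\ 0 <= y n /\ y n <= L).
 { intros y [Hy1 Hy2]. destruct (closure_Omega n H y Hy1). auto. }
 assert (Hexp1 : forall t, 0 <= t -> exp (- t) <= 1).
 { intros t Ht. rewrite <- exp_0. destruct Ht. left; apply exp_increasing; lra. subst; rewrite Ropp_0; lra. }
 assert (HhF : forall y, K y -> 0 <= hF y).
 { intros y Hy. destruct (HK y Hy) as [Hc _]. specialize (HspB y Hc). unfold hF.
   pose proof (exp_pos (a * (y n - L))). apply Rmult_le_pos. nra. lra. }
 assert (Hpsi : forall y, K y -> 0 <= psi y <= R2).
 { intros y Hy. destruct (HK y Hy) as [Hc [H0 _]]. specialize (HspB y Hc). specialize (Hsp0 y). unfold psi.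
   pose proof (Hexp1 _ H0). pose proof (exp_pos (- y n)). lra. }
 assert (HWb : forall y, K y -> W y <= MV + eps * R2).
 { intros y Hy. pose proof (HV y (proj1 Hy)). pose proof (HhF y Hy). pose proof (Hpsi y Hy). unfold W.
   pose proof (Rle_abs (v1 y - v2 y)). nra. }
 assert (HKx0 : K (ext n x0 0)). { split. apply ext0_closure; auto. rewrite ext_n; lra. }
 destruct (max_exists (S n) K W (B + L) (MV + eps * R2) (ext n x0 0)) as [q [Kq Hq]]; auto.
 { intros y Hy. split. apply (proj1 (proj1 Hy)). intros i Hi. destruct (HK y Hy) as [Hc [H0 H1]].
   destruct (Nat.eq_dec i n). subst. rewrite Rabs_right; lra.
   specialize (HB _ Hc i ltac:(lia)). unfold trunc in HB. destruct (Nat.ltb_spec i n); [|lia]. lra. }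
 { intros p q Hp Hq Hc.
   assert (Kq : K q). { split. apply closure_closed with p; auto. intros; apply Hp.
       apply (cv_le (fun k => p k n)). apply Hc; lia. intros; apply Hp. }
   split; auto. unfold W. apply CV_plus. apply CV_minus.
   apply (cont_cv (S n) _ _ p q Hc1); auto. intros; apply Hp. apply Kq.
   apply (cont_cv (S n) _ _ p q Hc2); auto. intros; apply Hp. apply Kq.
   assert (Hs : Un_cv (fun k => sp (p k)) (sp q)). { unfold sp. apply fsum_sq_cv. intros; apply Hc; lia. }
   assert (Hpn : Un_cv (fun k => p k n) (q n)) by (apply Hc; lia).
   apply CV_plus.
   - apply (cv_ext (fun k => - 1 * ((C * exp (a * (p k n - L))) * (2 * R2 - sp (p k))))). intros; unfold hF; ring.
     replace (- hF q) with (-1 * ((C * exp (a * (q n - L))) * (2 * R2 - sp q))) by (unfold hF; ring).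
     apply CV_mult. apply cv_const. apply CV_mult.
     apply (continuity_seq (fun t => C * exp (a * (t - L)))); auto. apply derivable_continuous_pt. reg.
     apply CV_minus; auto. apply cv_const.
   - apply CV_mult. apply cv_const. unfold psi. apply CV_plus; auto. apply CV_minus. apply cv_const.
     apply (continuity_seq (fun t => exp (- t))); auto. apply derivable_continuous_pt. reg. }

 assert (HWx0 : eps * R2 < W (ext n x0 0)).
 { unfold W. rewrite (Hu1 x0 Hx0), (Hu2 x0 Hx0). fold m. pose proof (Hpsi _ HKx0).
   assert (hF (ext n x0 0) <= 2 * MV * exp (- (a * L))).
   { unfold hF. rewrite ext_n. replace (a * (0 - L)) with (- (a * L)) by ring. pose proof (exp_pos (- (a * L))).
     pose proof (Hsp0 (ext n x0 0)). destruct HC as [HC1 HC2]. rewrite <- HC2. assert (0 <= C * exp (- (a * L)) * sp (ext n x0 0)) by (apply Rmult_le_pos; nra). nra. }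
   pose proof (exp_pos (- (a * L))). destruct Heps. assert (2 * MV * exp (- (a * L)) < eps) by nra. assert (0 <= eps * psi (ext n x0 0)) by nra. unfold m in *. lra. }
 pose proof (Hq _ HKx0) as Hmax.
 destruct (HK q Kq) as [Hcq [Hq0 HqL]].
 set (x := trunc n q). set (l := q n).
 assert (Heq : q = ext n x l) by (apply ext_trunc; apply (proj1 (proj1 Kq))).
 destruct (classic (H x)) as [Hx|Hnx].
 2:{ assert (Hbx : boundary n H x) by (split; auto).
     assert (W q <= eps * R2). { unfold W. rewrite Heq at 1 2. rewrite (Hl1 x l Hbx Hq0), (Hl2 x l Hbx Hq0).
        pose proof (HhF q Kq). pose proof (Hpsi q Kq). nra. } lra. }
 destruct (Rle_lt_dec L l) as [HlL|HlL].
 { assert (W q <= eps * R2). { unfold W. pose proof (HV q (proj1 Kq)). pose proof (Rle_abs (v1 q - v2 q)).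
     assert (MV <= hF q). { unfold hF. fold l. replace (a * (l - L)) with 0 by (unfold l in *; nra). rewrite exp_0.
       pose proof (HspB q Hcq). destruct HC as [HC1 HC2]. nra. }
     pose proof (Hpsi q Kq). nra. } lra. }
 destruct Hq0 as [Hl0|Hl0].
 2:{
   set (sx := sp (ext n x 0)).
   assert (Hsx : forall t, sp (ext n x t) = sx).
   { intros t. unfold sx, sp. apply fsum_ext. intros i Hi. rewrite !ext_lt by auto. auto. }
   assert (Hrd : right_deriv (fun t => W (ext n x t)) 0
       ((- w1 x + - - w2 x) + (- (C * (a * exp (a * (- L))) * (2*R2 - sx)) + eps))).
   { eapply right_ext. 2:{ apply right_plus. apply right_plus. apply (Hr1 x Hx). apply right_opp. apply (Hr2 x Hx).
       apply dpl_right. apply ge_n_d0. }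
     intros t. simpl. unfold W, hF, psi. rewrite ext_n, Hsx. ring. }
   assert (HD : 0 < (- w1 x + - - w2 x) + (- (C * (a * exp (a * (- L))) * (2*R2 - sx)) + eps)).
   { pose proof (Hw x Hx). replace (a * (- L)) with (- (a * L)) by ring. pose proof (exp_pos (- (a * L))).
     pose proof (Hsp0 (ext n x 0)) as Hsx0. fold sx in Hsx0. pose proof (Hw x Hx) as Hwx. destruct HC as [HC1 HC2]. destruct Ha as [Ha1 [Ha2 Ha3]].
     assert (C * (a * exp (- (a * L))) * (2 * R2 - sx) <= 2 * MV * exp (- (a * L)) * a).
     { rewrite <- HC2. assert (0 <= C * (a * exp (- (a * L))) * sx) by (apply Rmult_le_pos; [left; apply Rmult_lt_0_compat; [lra|apply Rmult_lt_0_compat; lra]|lra]). assert (2 * (C * R2) * exp (- (a * L)) * a - C * (a * exp (- (a * L))) * (2 * R2 - sx) = C * (a * exp (- (a * L))) * sx) by ring. lra. }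
     nra. }
   destruct (right_pos _ _ Hrd HD L HL) as [t [Ht Hgt]].
   assert (Kt : K (ext n x t)). { split. apply closure_self. apply ext_inRn. apply Omega_ext; auto. lra. rewrite ext_n; lra. }
   pose proof (Hq _ Kt) as Hqt. assert (Hl00 : l = 0) by (unfold l; lra). rewrite Heq, Hl00 in Hqt. cbv beta in Hgt. lra. }
 destruct Hh1 as [d1a [d2a [[P1a [P2a _]] Lapa]]]. destruct Hh2 as [d1b [d2b [[P1b [P2b _]] Lapb]]].
 assert (HOq : Omega n H q). { split. apply (proj1 (proj1 Kq)). split; auto. }
 destruct (proj2 HHopen x Hx) as [r [Hr Hball]].
 unfold l in *. clear l. set (sq := sp q).
 set (dl := Rmin (r / (INR n + 1)) (Rmin (q n) (L - q n))).
 assert (Hdl : 0 < dl /\ dl <= r / (INR n + 1) /\ dl <= q n /\ dl <= L - q n).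
 { unfold dl. pose proof (Rmin_l (r / (INR n + 1)) (Rmin (q n) (L - q n))). pose proof (Rmin_r (r / (INR n + 1)) (Rmin (q n) (L - q n))).
   pose proof (Rmin_l (q n) (L - q n)). pose proof (Rmin_r (q n) (L - q n)).
   assert (0 < r / (INR n + 1)) by (apply Rdiv_lt_0_compat; pose proof (pos_INR n); lra).
   repeat split; try lra. apply Rmin_case; [lra|apply Rmin_case; lra]. }
 assert (Hnb : forall i t, (i < S n)%nat -> Rabs t < dl -> Omega n H (upd q i t) /\ K (upd q i t)).
 { intros i t Hi Ht. destruct Hdl as [Hd1 [Hd2 [Hd3 Hd4]]].
   assert (HO : Omega n H (upd q i t)).
   { split. intros j Hj. rewrite upd_other by lia. apply (proj1 (proj1 Kq)); auto. split.
     - destruct (Nat.eq_dec i n).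
       + subst i. replace (trunc n (upd q n t)) with x; auto. apply functional_extensionality; intro j. unfold x, trunc.
         destruct (Nat.ltb_spec j n); auto. rewrite upd_other by lia; auto.
       + replace (trunc n (upd q i t)) with (upd x i t).
         apply Hball. intros j Hj. rewrite upd_other by lia. unfold x, trunc. destruct (Nat.ltb_spec j n); [lia|auto].
         eapply Rle_lt_trans. apply dist_upd. pose proof (pos_INR n). apply Rle_lt_trans with (INR n * (r / (INR n + 1))).
         apply Rmult_le_compat_l; lra. replace (INR n * (r / (INR n + 1))) with (r * (INR n / (INR n + 1))) by (field; lra).
         assert (INR n / (INR n + 1) < 1). { apply Rmult_lt_reg_r with (INR n + 1). lra. unfold Rdiv. rewrite Rmult_assoc, Rinv_l; lra. }
         nra.
         apply functional_extensionality; intro j. unfold x, trunc, upd. destruct (Nat.eqb_spec j i); destruct (Nat.ltb_spec j n); subst; auto; lia.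
     - destruct (Nat.eq_dec i n). subst i. rewrite upd_self. apply Rabs_def2 in Ht. lra. rewrite upd_other by lia. lra. }
   split; auto. split. apply closure_self; auto.
   destruct (Nat.eq_dec i n). subst i. rewrite upd_self. apply Rabs_def2 in Ht. lra. rewrite upd_other by lia. lra. }
 set (Elt := 2 * C * exp (a * (q n - L)) + 2 * eps).
 set (En := - (C * (a * (a * exp (a * (q n - L)))) * (2*R2 - sq)) - eps * exp (- q n)).
 set (Dfun := fun i => d2a i i q + -1 * d2b i i q + (if Nat.ltb i n then Elt else En)).
 assert (Hdi : forall i, (i < S n)%nat -> Dfun i <= 0).
 { intros i Hi. unfold Dfun. destruct (Nat.ltb_spec i n).
   - replace (d2a i i q + -1 * d2b i i q + Elt) with ((d2a i i q - d2b i i q) + Elt) by ring.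
     apply (max2 (fun t => W (upd q i t))
       (fun t => (d1a i (upd q i t) - d1b i (upd q i t)) + (C * exp (a * (q n - L)) * (2 * (q i + t)) + eps * (2 * (q i + t)))) dl).
     + apply Hdl.
     + intros t Ht. eapply derivable_pt_lim_ext. 2:{ apply derivable_pt_lim_plus. apply derivable_pt_lim_minus.
         apply partial_shift. apply P1a; auto. apply (Hnb i t Hi Ht). apply partial_shift. apply P1b; auto. apply (Hnb i t Hi Ht).
         apply (ge_lt_d1 C a (q n) L R2 sq (q i) eps t). }
       intros z. unfold plus_fct, minus_fct, W, hF, psi, sq, sp. rewrite s_upd_lt by auto. rewrite upd_other by lia. ring.
     + eapply derivable_pt_lim_ext. 2:{ apply derivable_pt_lim_plus. apply derivable_pt_lim_minus.
         apply (P2a i i q); auto. apply (P2b i i q); auto. apply (ge_lt_d2 C a (q n) L (q i) eps). }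
       intros z. unfold plus_fct, minus_fct. ring.
     + intros t Ht. rewrite upd0. apply Hq. apply (Hnb i t Hi Ht).
   - assert (i = n) by lia. subst i.
     replace (d2a n n q + -1 * d2b n n q + En) with ((d2a n n q - d2b n n q) + En) by ring.
     apply (max2 (fun t => W (upd q n t))
       (fun t => (d1a n (upd q n t) - d1b n (upd q n t)) + (- (C * (a * exp (a * (q n + t - L))) * (2*R2 - sq)) + eps * exp (- (q n + t)))) dl).
     + apply Hdl.
     + intros t Ht. eapply derivable_pt_lim_ext. 2:{ apply derivable_pt_lim_plus. apply derivable_pt_lim_minus.
         apply partial_shift. apply P1a; auto. apply (Hnb n t Hi Ht). apply partial_shift. apply P1b; auto. apply (Hnb n t Hi Ht).
         apply (ge_n_d1 C a (q n) L R2 sq eps t). }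
       intros z. unfold plus_fct, minus_fct, W, hF, psi, sq, sp. rewrite s_upd_n, upd_self. ring.
     + eapply derivable_pt_lim_ext. 2:{ apply derivable_pt_lim_plus. apply derivable_pt_lim_minus.
         apply (P2a n n q); auto. apply (P2b n n q); auto. apply (ge_n_d2 C a (q n) L R2 sq eps). }
       intros z. unfold plus_fct, minus_fct. ring.
     + intros t Ht. rewrite upd0. apply Hq. apply (Hnb n t Hi Ht). }
 assert (Hsum : fsum (S n) Dfun <= 0).
 { apply Rle_trans with (fsum (S n) (fun _ => 0)). apply fsum_le; auto. rewrite fsum_const; lra. }
 unfold Dfun in Hsum. rewrite !fsum_plus, fsum_scal, (Lapa q HOq), (Lapb q HOq) in Hsum.
 change (fsum (S n) ?f) with (fsum n f + f n) in Hsum. cbv beta in Hsum. rewrite Nat.ltb_irrefl in Hsum.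
 rewrite (fsum_ext n _ (fun _ => Elt)) in Hsum. 2:{ intros i Hi. destruct (Nat.ltb_spec i n); [auto|lia]. }
 rewrite fsum_const in Hsum.
 assert (Hn1 : 1 <= INR n) by (apply (le_INR 1); lia).
 set (E := exp (a * (q n - L))). assert (HE : 0 < E) by apply exp_pos.
 destruct HC as [HC1 HC2]. destruct Ha as [Ha1 [Ha2 Ha3]]. destruct Heps as [Heps1 Heps2].
 assert (HCE : 0 < C * E) by (apply Rmult_lt_0_compat; lra).
 assert (Hsq : 0 <= sq) by apply Hsp0.
 assert (He1 : exp (- q n) < 1). { rewrite <- exp_0. apply exp_increasing. lra. }
 assert (Ht1 : C * (a * (a * E)) * (2 * R2 - sq) <= 2 * (C * E)).
 { assert (C * (a * (a * E)) * (2 * R2 - sq) = (C * E) * (2 * a * (a * R2)) - (C * E) * (a * a * sq)) by ring.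
   rewrite Ha3 in H0. assert (0 <= (C * E) * (a * a * sq)). { apply Rmult_le_pos. lra. apply Rmult_le_pos; nra. }
   nra. }
 assert (Ht2 : 2 * (C * E) <= INR n * (2 * C * E)) by nra.
 assert (Ht3 : eps * exp (- q n) < INR n * (2 * eps)) by nra.
 unfold Elt, En in Hsum. fold E in Hsum. lra.
Qed.
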